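(* Let $0<a<1$, $0<b<1$ and $\epsilon>0$, and let $I\in\mathbb{R}$ and $\gamma\ge 0$. Consider the system \begin{align*} \dot y_A &= y_A-\tfrac{y_A^3}{3}-a-z_A+I, & \dot z_A &= \epsilon(y_A-bz_A),\\ \dot y_B &= y_B-\tfrac{y_B^3}{3}-a-z_B+\gamma(y_A-y_B), & \dot z_B &= \epsilon(y_B-bz_B). \end{align*} Then for every fixed $I$ and $\gamma$ the system has a unique equilibrium point $\mathbf{p}_*=(y_{A*},z_{A*},y_{B*},z_{B*})$. Define $$\sigma_1(I,\gamma)=1-b\epsilon-y_{A*}^2,\qquad \sigma_2(I,\gamma)=1-b\epsilon-\gamma-y_{B*}^2.$$ Then: (1) $\mathbf{p}_*$ is nonhyperbolic if $\sigma_1(I,\gamma)=0$ or $\sigma_2(I,\gamma)=0$; (2) $\mathbf{p}_*$ is hyperbolic if $\sigma_1(I,\gamma)\neq 0$ and $\sigma_2(I,\gamma)\neq 0$; in that case $\mathbf{p}_*$ is attracting if $\sigma_1<0$ and $\sigma_2<0$, repelling if $\sigma_1>0$ and $\sigma_2>0$, and a saddle if $\sigma_1\sigma_2<0$.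
   Context: This is the directed (unidirectionally coupled) two-FitzHugh–Nagumo system: neuron $A$ receives external input $I$, neuron $B$ receives no input and is coupled from $A$ with coupling strength $\gamma$. The paper's standing assumption (Assumption 1) is that the parameters are such that a single FitzHugh–Nagumo neuron $\dot y=y-y^3/3-a-z+I$, $\dot z=\epsilon(y-bz)$ has a unique equilibrium for all $I\ge 0$, which the paper states amounts to $0<a<1$ and $0<b<1$; $\epsilon$ is a small positive timescale separation constant. *)

(* Defs.v *)
From HB Require Import structures.
From mathcomp Require Import all_boot all_order all_algebra.
From mathcomp Require Import all_classical all_reals all_analysis.
From mathcomp Require Import complex.
Set Implicit Arguments. Unset Strict Implicit. Unset Printing Implicit Defensive.
Import Order.TTheory GRing.Theory Num.Theory.
Local Open Scope ring_scope.

Definition yA {R : realType} (p : 'rV[R]_4) : R := p 0 (inord 0).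
Definition zA {R : realType} (p : 'rV[R]_4) : R := p 0 (inord 1).
Definition yB {R : realType} (p : 'rV[R]_4) : R := p 0 (inord 2).
Definition zB {R : realType} (p : 'rV[R]_4) : R := p 0 (inord 3).

Definition fhn2_vf {R : realType} (a b eps I gam : R) (p : 'rV[R]_4) : 'rV[R]_4 :=
  \row_(i < 4)
    match val i with
    | 0%N => yA p - (yA p) ^+ 3 / 3 - a - zA p + I
    | 1%N => eps * (yA p - b * zA p)
    | 2%N => yB p - (yB p) ^+ 3 / 3 - a - zB p + gam * (yA p - yB p)
    | _ => eps * (yB p - b * zB p)
    end.

Definition jacobian {R : realType} (f : 'rV[R]_4 -> 'rV[R]_4) (p : 'rV[R]_4)
  : 'M[R]_4 :=
  \matrix_(i < 4, j < 4) derive1 (fun t : R => f (p + t *: delta_mx 0 j) 0 i) 0.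

Definition is_eigenvalue {R : realType} (M : 'M[R]_4) (l : R[i]) : Prop :=
  eigenvalue (map_mx (fun x : R => x%:C%C) M) l.

Definition hyperbolic {R : realType} (f : 'rV[R]_4 -> 'rV[R]_4) p : Prop :=
  forall l, is_eigenvalue (jacobian f p) l -> Re l != 0.
Definition nonhyperbolic {R : realType} (f : 'rV[R]_4 -> 'rV[R]_4) p : Prop :=
  exists l, is_eigenvalue (jacobian f p) l /\ Re l = 0.
Definition attracting {R : realType} (f : 'rV[R]_4 -> 'rV[R]_4) p : Prop :=
  forall l, is_eigenvalue (jacobian f p) l -> Re l < 0.
Definition repelling {R : realType} (f : 'rV[R]_4 -> 'rV[R]_4) p : Prop :=
  forall l, is_eigenvalue (jacobian f p) l -> 0 < Re l.
Definition saddle {R : realType} (f : 'rV[R]_4 -> 'rV[R]_4) p : Prop :=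
  hyperbolic f p /\
  (exists l, is_eigenvalue (jacobian f p) l /\ Re l < 0) /\
  (exists l, is_eigenvalue (jacobian f p) l /\ 0 < Re l).

(* Main.v *)
Require Import Defs.
From HB Require Import structures.
From mathcomp Require Import all_boot all_order all_algebra.
From mathcomp Require Import all_classical all_reals all_analysis.
From mathcomp Require Import complex.
From mathcomp Require Import ring lra.
Import Order.TTheory GRing.Theory Num.Theory.
Local Open Scope ring_scope.


Lemma der_cubic (R : realType) (c0 c1 c2 c3 : R) :
  derive1 (fun t : R => c0 + c1 * t + c2 * t ^+ 2 + c3 * t ^+ 3) 0 = c1.
Proof.
pose P : {poly R} := c0%:P + c1 *: 'X + c2 *: 'X^2 + c3 *: 'X^3.
have -> : (fun t : R => c0 + c1 * t + c2 * t ^+ 2 + c3 * t ^+ 3) = horner P.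
  by apply: funext => t; rewrite /P !hornerE.
rewrite derive1E derive_val /P !poly.derivE !hornerE /=. 
ring.
Qed.

Lemma cplx_quad (R : realType) (T D : R) (l : R[i]) : 0 < D ->
  l ^+ 2 - (real_complex R T) * l + (real_complex R D) = 0 ->
  (T = 0 -> complex.Re l = 0) /\ (T != 0 -> 0 < complex.Re l * T).
Proof.
case: l => x y /= HD.
rewrite expr2.
move=> /(congr1 (fun z => (complex.Re z, complex.Im z))); simpc => -[] E1 E2.
have H : y * (2 * x - T) = 0 by rewrite -[RHS]E2; ring.
move/eqP: H; rewrite mulf_eq0 => /orP[/eqP y0|/eqP h].
  subst y; split => [T0|TN]; first by subst T; nra.
  nra.
split => [T0|TN]; first lra.
have hT : 0 < T * T by rewrite lt0r mulf_neq0 //= -expr2 sqr_ge0.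
nra.
Qed.


Lemma det22 (F : comNzRingType) (A : 'M[F]_2) :
  \det A = A 0 0 * A 1 1 - A 0 1 * A 1 0.
Proof.
rewrite (expand_det_row _ 0) !big_ord_recl big_ord0 addr0 /cofactor !det_mx11 !mxE /=.
have e1 : (lift 0 0 : 'I_2) = 1 by apply/val_inj.
have e2 : (lift ord0 0 : 'I_2) = 1 by apply/val_inj.
have e3 : (lift ord0 ord0 : 'I_2) = 1 by apply/val_inj.
have e4 : (lift (lift ord0 ord0) 0 : 'I_2) = 0 by apply/val_inj.
have e5 : (lift 1 0 : 'I_2) = 0 by apply/val_inj.
rewrite ?e1 ?e2 ?e3 ?e4 /bump /= expr1 ?e5 expr0; ring.
Qed.

Lemma det4 (F : comNzRingType) (f : nat -> nat -> F) :
  f 0%N 2%N = 0 -> f 0%N 3%N = 0 -> f 1%N 2%N = 0 -> f 1%N 3%N = 0 ->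
  \det (\matrix_(i < 4, j < 4) f i j) =
  (f 0%N 0%N * f 1%N 1%N - f 0%N 1%N * f 1%N 0%N) * (f 2%N 2%N * f 3%N 3%N - f 2%N 3%N * f 3%N 2%N).
Proof.
move=> h02 h03 h12 h13.
set N := \matrix_(i < 4, j < 4) f i j.
rewrite -(@submxK F 2 2 2 2 N).
have -> : @ursubmx F 2 2 2 2 N = 0.
  apply/matrixP => i j; rewrite !mxE /=.
  by case: i => [[|[|//]] ?]; case: j => [[|[|//]] ?].
rewrite (@det_lblock F 2 2) !det22 /N !mxE /=.
by [].
Qed.

Lemma quad_root (R : realType) (T D : R) :
  exists l : R[i], l ^+ 2 - (real_complex R T) * l + (real_complex R D) = 0.
Proof.
have [x hx] := @solve_monicpoly R[i] 2 (nth 0 [:: - real_complex R D; real_complex R T]) isT.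
exists x; rewrite hx !big_ord_recl big_ord0 /= expr0 expr1; ring.
Qed.
Lemma der_row0 (R : realType) (u v dy dz a I : R) :
  derive1 (fun t : R => (u + t * dy) - (u + t * dy) ^+ 3 / 3 - a - (v + t * dz) + I) 0
  = dy - u ^+ 2 * dy - dz.
Proof.
rewrite (_ : (fun t : R => _) = (fun t => (u - u ^+ 3 / 3 - a - v + I)
   + (dy - u ^+ 2 * dy - dz) * t + (- u * dy ^+ 2) * t ^+ 2 + (- dy ^+ 3 / 3) * t ^+ 3)).
  by rewrite der_cubic.
apply: funext => t; by field.
Qed.

Lemma der_row1 (R : realType) (u v dy dz e b : R) :
  derive1 (fun t : R => e * ((u + t * dy) - b * (v + t * dz))) 0
  = e * (dy - b * dz).
Proof.
rewrite (_ : (fun t : R => _) = (fun t => (e * (u - b * v))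
   + (e * (dy - b * dz)) * t + 0 * t ^+ 2 + 0 * t ^+ 3)).
  by rewrite der_cubic.
apply: funext => t; ring.
Qed.

Lemma der_row2 (R : realType) (u v w dy dz dw a g : R) :
  derive1 (fun t : R => (u + t * dy) - (u + t * dy) ^+ 3 / 3 - a - (v + t * dz)
      + g * ((w + t * dw) - (u + t * dy))) 0
  = dy - u ^+ 2 * dy - dz + g * (dw - dy).
Proof.
rewrite (_ : (fun t : R => _) = (fun t => (u - u ^+ 3 / 3 - a - v + g * (w - u))
   + (dy - u ^+ 2 * dy - dz + g * (dw - dy)) * t + (- u * dy ^+ 2) * t ^+ 2 + (- dy ^+ 3 / 3) * t ^+ 3)).
  by rewrite der_cubic.
apply: funext => t; by field.
Qed.

Definition dd {R : realType} (j k : nat) : R := (j == k)%:R.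

Definition Jf {R : realType} (b eps gam : R) (p : 'rV[R]_4) (i j : nat) : R :=
  match i with
  | 0%N => dd j 0 - yA p ^+ 2 * dd j 0 - dd j 1
  | 1%N => eps * (dd j 0 - b * dd j 1)
  | 2%N => dd j 2 - yB p ^+ 2 * dd j 2 - dd j 3 + gam * (dd j 0 - dd j 2)
  | _ => eps * (dd j 2 - b * dd j 3)
  end.

Lemma jacE (R : realType) (a b eps I gam : R) (p : 'rV[R]_4) :
  Defs.jacobian (fhn2_vf a b eps I gam) p = \matrix_(i < 4, j < 4) Jf b eps gam p i j.
Proof.
apply/matrixP => i j; rewrite !mxE.
have cE : forall k, (k < 4)%N -> forall t : R,
    (p + t *: delta_mx 0 j) 0 (inord k) = p 0 (inord k) + t * dd j k.
  move=> k hk t; rewrite !mxE eqxx /=.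
  have -> : (inord k == j) = (val j == k) by rewrite -val_eqE /= inordK // eq_sym.
  by [].
case: i => [[|[|[|[|//]]]] Hi] /=.
- rewrite -(der_row0 R (yA p) (zA p) (dd j 0) (dd j 1) a I); congr (derive1 _ 0); apply: funext => t.
  by rewrite mxE /= /yA /zA !cE.
- rewrite -(der_row1 R (yA p) (zA p) (dd j 0) (dd j 1) eps b); congr (derive1 _ 0); apply: funext => t.
  by rewrite mxE /= /yA /zA !cE.
- rewrite -(der_row2 R (yB p) (zB p) (yA p) (dd j 2) (dd j 3) (dd j 0) a gam); congr (derive1 _ 0); apply: funext => t.
  by rewrite mxE /= /yA /zA /yB /zB !cE.
- rewrite -(der_row1 R (yB p) (zB p) (dd j 2) (dd j 3) eps b); congr (derive1 _ 0); apply: funext => t.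
  by rewrite mxE /= /yB /zB !cE.
Qed.
Lemma eigenvalue_det (F : fieldType) n (A : 'M[F]_n) a :
  eigenvalue A a = (\det (a%:M - A) == 0).
Proof.
apply/eigenvalueP/det0P=> [[v Av_av v_nz] | [v v_nz Av_av]]; exists v => //.
  by rewrite mulmxBr Av_av mul_mx_scalar subrr.
by apply/eqP; rewrite -mul_mx_scalar eq_sym -subr_eq0 -mulmxBr Av_av.
Qed.

Definition qd {R : realType} (T D : R) (l : R[i]) : R[i] :=
  l ^+ 2 - (real_complex R T) * l + (real_complex R D).

Lemma eig_char (R : realType) (b eps gam : R) (p : 'rV[R]_4) (l : R[i]) :
  is_eigenvalue (\matrix_(i < 4, j < 4) Jf b eps gam p i j) l <->
  qd (1 - b * eps - yA p ^+ 2) (eps * (1 - b * (1 - yA p ^+ 2))) l *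
  qd (1 - b * eps - gam - yB p ^+ 2) (eps * (1 - b * (1 - gam - yB p ^+ 2))) l = 0.
Proof.
rewrite /is_eigenvalue eigenvalue_det.
pose g (i j : nat) := l *+ (i == j) - real_complex R (Jf b eps gam p i j).
have -> : l%:M - map_mx (fun x : R => x%:C%C) (\matrix_(i < 4, j < 4) Jf b eps gam p i j)
   = \matrix_(i < 4, j < 4) g i j.
  by apply/matrixP => i j; rewrite !mxE.
have z : forall i j, Jf b eps gam p i j = 0 -> i != j -> g i j = 0.
  by move=> i j h /negbTE hij; rewrite /g h hij mulr0n rmorph0 subr0.
rewrite det4; first last.
- by apply: z => //; rewrite /Jf /dd /=; ring.
- by apply: z => //; rewrite /Jf /dd /=; ring.
- by apply: z => //; rewrite /Jf /dd /=; ring.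
- by apply: z => //; rewrite /Jf /dd /=; ring.
have -> : g 0%N 0%N * g 1%N 1%N - g 0%N 1%N * g 1%N 0%N =
   qd (1 - b * eps - yA p ^+ 2) (eps * (1 - b * (1 - yA p ^+ 2))) l.
  rewrite /g /Jf /dd /qd /= !(rmorphB, rmorphM, rmorphD, rmorphN, rmorphXn, rmorph1, rmorph0) /=.
  ring.
have -> : g 2%N 2%N * g 3%N 3%N - g 2%N 3%N * g 3%N 2%N =
   qd (1 - b * eps - gam - yB p ^+ 2) (eps * (1 - b * (1 - gam - yB p ^+ 2))) l.
  rewrite /g /Jf /dd /qd /= !(rmorphB, rmorphM, rmorphD, rmorphN, rmorphXn, rmorph1, rmorph0) /=.
  ring.
by split => /eqP.
Qed.


Lemma cubic_root (R : realType) (m c : R) : m <= 0 ->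
  exists y : R, - y ^+ 3 / 3 + m * y + c = 0.
Proof.
move=> hm.
pose P : {poly R} := 3^-1 *: 'X^3 - m *: 'X - c%:P.
pose M := 1 + 3 * `|c|.
have hc := normr_ge0 c.
have hc1 : - `|c| <= c <= `|c| by rewrite -ler_norml.
have hM : 1 <= M by rewrite /M; lra.
have hM3 : M <= M ^+ 3.
  have : 1 <= M ^+ 2 by rewrite expr2; nra.
  by rewrite exprS; nra.
have hPE : forall x, P.[x] = x ^+ 3 / 3 - m * x - c.
  by move=> x; rewrite /P !(hornerD, hornerN, hornerZ, hornerXn, hornerX, hornerC); field.
have hmM : m * M <= 0 by nra.
have hiv : P.[- M] <= 0 <= P.[M].
  rewrite !hPE; apply/andP; split.
    have -> : (- M) ^+ 3 = - M ^+ 3 by ring.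
    rewrite /M in hM3 hmM *; lra.
  rewrite /M in hM3 hmM *; lra.
have [y _ ry] := @poly_ivt R P (- M) M ltac:(lra) hiv.
exists y; move/rootP: ry; rewrite hPE => h.
by rewrite -[RHS]oppr0 -h; ring.
Qed.

Lemma cubic_uniq (R : realType) (m y1 y2 : R) : m <= 0 ->
  - y1 ^+ 3 / 3 + m * y1 = - y2 ^+ 3 / 3 + m * y2 -> y1 = y2.
Proof.
move=> hm h.
have h' : (y1 - y2) * (- (y1 ^+ 2 + y1 * y2 + y2 ^+ 2) + 3 * m) = 0.
  transitivity (3 * ((- y1 ^+ 3 / 3 + m * y1) - (- y2 ^+ 3 / 3 + m * y2))).
    by field.
  by rewrite h subrr mulr0.
move/eqP: h'; rewrite mulf_eq0 => /orP[/eqP|/eqP h2]; first by move/subr0_eq.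
have : y1 ^+ 2 + y1 * y2 + y2 ^+ 2 = 0.
  have : 0 <= y1 ^+ 2 + y1 * y2 + y2 ^+ 2.
    have : 0 <= (y1 + y2) ^+ 2 by apply: sqr_ge0.
    have : 0 <= y1 ^+ 2 by apply: sqr_ge0.
    have : 0 <= y2 ^+ 2 by apply: sqr_ge0.
    rewrite !expr2; nra.
  lra.
rewrite !expr2 => hs.
have : 0 <= y1 * y1 by nra.
have : 0 <= y2 * y2 by nra.
have : 0 <= (y1 + y2) * (y1 + y2) by nra.
nra.
Qed.


Definition mk {R : realType} (y1 z1 y2 z2 : R) : 'rV[R]_4 :=
  \row_(i < 4) nth 0 [:: y1; z1; y2; z2] i.

Lemma mkE (R : realType) (y1 z1 y2 z2 : R) :
  [/\ yA (mk y1 z1 y2 z2) = y1, zA (mk y1 z1 y2 z2) = z1,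
      yB (mk y1 z1 y2 z2) = y2 & zB (mk y1 z1 y2 z2) = z2].
Proof. by rewrite /yA /zA /yB /zB !mxE !inordK. Qed.

Lemma rv4_ext (R : realType) (p q : 'rV[R]_4) :
  yA p = yA q -> zA p = zA q -> yB p = yB q -> zB p = zB q -> p = q.
Proof.
rewrite /yA /zA /yB /zB => h0 h1 h2 h3.
apply/rowP => i.
case: i => [[|[|[|[|//]]]] Hi].
- by move: h0; congr (p 0 _ = q 0 _); apply/val_inj; rewrite /= inordK.
- by move: h1; congr (p 0 _ = q 0 _); apply/val_inj; rewrite /= inordK.
- by move: h2; congr (p 0 _ = q 0 _); apply/val_inj; rewrite /= inordK.
- by move: h3; congr (p 0 _ = q 0 _); apply/val_inj; rewrite /= inordK.
Qed.

Lemma vf_eqs (R : realType) (a b eps I gam : R) (p : 'rV[R]_4) :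
  fhn2_vf a b eps I gam p = 0 <->
  [/\ yA p - yA p ^+ 3 / 3 - a - zA p + I = 0,
      eps * (yA p - b * zA p) = 0,
      yB p - yB p ^+ 3 / 3 - a - zB p + gam * (yA p - yB p) = 0 &
      eps * (yB p - b * zB p) = 0].
Proof.
split.
  move=> H.
  have h : forall k, (k < 4)%N -> fhn2_vf a b eps I gam p 0 (inord k) = 0.
    by move=> k hk; rewrite H mxE.
  have := h 0%N isT; have := h 1%N isT; have := h 2%N isT; have := h 3%N isT.
  have vE : forall k, (k < 4)%N -> \val (inord k : 'I_4) = k.
    by move=> k hk; exact: inordK.
  by rewrite !mxE !vE.
move=> [h0 h1 h2 h3]; apply/rowP => i; rewrite !mxE.
by case: i => [[|[|[|[|//]]]] Hi].
Qed.

Lemma ReC_eq0 (R : realType) (l : R[i]) : ('Re l == 0) = (complex.Re l == 0).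
Proof. by rewrite -complexRe eq_complex /= eqxx andbT. Qed.

Lemma ReC_lt0 (R : realType) (l : R[i]) : ('Re l < 0) = (complex.Re l < 0).
Proof. by rewrite -complexRe; exact: (ltcR (complex.Re l) 0). Qed.

Lemma ReC_gt0 (R : realType) (l : R[i]) : (0 < 'Re l) = (0 < complex.Re l).
Proof. by rewrite -complexRe; exact: (ltcR 0 (complex.Re l)). Qed.

Theorem proposition3 (R : realType) (a b eps I gam : R) :
  0 < a < 1 -> 0 < b < 1 -> 0 < eps -> 0 <= gam ->
  (exists! p : 'rV[R]_4, fhn2_vf a b eps I gam p = 0) /\
  (forall p : 'rV[R]_4, fhn2_vf a b eps I gam p = 0 ->
     let sigma1 := 1 - b * eps - (yA p) ^+ 2 in
     let sigma2 := 1 - b * eps - gam - (yB p) ^+ 2 in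
     ((sigma1 = 0 \/ sigma2 = 0) -> nonhyperbolic (fhn2_vf a b eps I gam) p) /\
     (sigma1 != 0 -> sigma2 != 0 ->
        hyperbolic (fhn2_vf a b eps I gam) p /\
        (sigma1 < 0 -> sigma2 < 0 -> attracting (fhn2_vf a b eps I gam) p) /\
        (0 < sigma1 -> 0 < sigma2 -> repelling (fhn2_vf a b eps I gam) p) /\
        (sigma1 * sigma2 < 0 -> saddle (fhn2_vf a b eps I gam) p))).
Proof.
move=> /andP[a0 a1] /andP[b0 b1] e0 g0.
have bn0 : b != 0 by rewrite gt_eqF.
have en0 : eps != 0 by rewrite gt_eqF.
have hbi : 1 <= b^-1 by rewrite invf_ge1 // ltW.
have eqA : forall p, fhn2_vf a b eps I gam p = 0 ->
   zA p = yA p / b /\ - yA p ^+ 3 / 3 + (1 - b^-1) * yA p + (I - a) = 0.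
  move=> p /vf_eqs [h0 h1 h2 h3].
  have hz : zA p = yA p / b.
    move/eqP: h1; rewrite mulf_eq0 (negbTE en0) /= subr_eq0 => /eqP ->.
    by rewrite [RHS]mulrC mulKf.
  by split => //; rewrite -[RHS]h0 hz; ring.
have eqB : forall p, fhn2_vf a b eps I gam p = 0 ->
   zB p = yB p / b /\
   - yB p ^+ 3 / 3 + (1 - b^-1 - gam) * yB p + (gam * yA p - a) = 0.
  move=> p /vf_eqs [h0 h1 h2 h3].
  have hz : zB p = yB p / b.
    move/eqP: h3; rewrite mulf_eq0 (negbTE en0) /= subr_eq0 => /eqP ->.
    by rewrite [RHS]mulrC mulKf.
  by split => //; rewrite -[RHS]h2 hz; ring.
split.
  have [y1 hy1] := @cubic_root R (1 - b^-1) (I - a) ltac:(lra).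
  have [y2 hy2] := @cubic_root R (1 - b^-1 - gam) (gam * y1 - a) ltac:(lra).
  case: (mkE R y1 (y1 / b) y2 (y2 / b)) => e1 e2 e3 e4.
  exists (mk y1 (y1 / b) y2 (y2 / b)); split.
    apply/vf_eqs; rewrite e1 e2 e3 e4; split.
    - by rewrite -[RHS]hy1; field.
    - by rewrite [b * _]mulrC divfK // subrr mulr0.
    - by rewrite -[RHS]hy2; field.
    - by rewrite [b * _]mulrC divfK // subrr mulr0.
  move=> q hq; have [hzq hyq] := eqA q hq; have [hzBq hyBq] := eqB q hq.
  have ea : y1 = yA q.
    by apply: (@cubic_uniq R (1 - b^-1)); lra.
  have eb : y2 = yB q.
    rewrite -ea in hyBq.
    by apply: (@cubic_uniq R (1 - b^-1 - gam)); lra.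
  by apply: rv4_ext; rewrite ?e1 ?e2 ?e3 ?e4 ?hzq ?hzBq -?ea -?eb.
move=> p _ s1 s2.
pose D1 := eps * (1 - b * (1 - yA p ^+ 2)).
pose D2 := eps * (1 - b * (1 - gam - yB p ^+ 2)).
have key : forall l, is_eigenvalue (Defs.jacobian (fhn2_vf a b eps I gam) p) l <->
    qd s1 D1 l * qd s2 D2 l = 0.
  by move=> l; rewrite jacE; exact: eig_char.
have hD1 : 0 < D1.
  have := sqr_ge0 (yA p); rewrite /D1 => h; apply: mulr_gt0 => //; nra.
have hD2 : 0 < D2.
  have := sqr_ge0 (yB p); rewrite /D2 => h; apply: mulr_gt0 => //; nra.
have cls : forall l, is_eigenvalue (Defs.jacobian (fhn2_vf a b eps I gam) p) l ->
    (qd s1 D1 l = 0) \/ (qd s2 D2 l = 0).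
  by move=> l /key /eqP; rewrite mulf_eq0 => /orP[/eqP|/eqP]; [left|right].
have eig1 : forall l, qd s1 D1 l = 0 ->
    is_eigenvalue (Defs.jacobian (fhn2_vf a b eps I gam) p) l.
  by move=> l h; apply/key; rewrite h mul0r.
have eig2 : forall l, qd s2 D2 l = 0 ->
    is_eigenvalue (Defs.jacobian (fhn2_vf a b eps I gam) p) l.
  by move=> l h; apply/key; rewrite h mulr0.
split.
  case=> hs.
    have [l hl] := quad_root R s1 D1.
    exists l; split; first exact: eig1.
    apply/eqP; rewrite ReC_eq0; apply/eqP.
    by have [h _] := cplx_quad R _ _ _ hD1 hl; exact: h.
  have [l hl] := quad_root R s2 D2.
  exists l; split; first exact: eig2.
  apply/eqP; rewrite ReC_eq0; apply/eqP.
  by have [h _] := cplx_quad R _ _ _ hD2 hl; exact: h.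
move=> n1 n2.
have sg : forall l, is_eigenvalue (Defs.jacobian (fhn2_vf a b eps I gam) p) l ->
   0 < complex.Re l * s1 \/ 0 < complex.Re l * s2.
  move=> l /cls [hl|hl]; [left|right].
    by have [_ h] := cplx_quad R _ _ _ hD1 hl; exact: h.
  by have [_ h] := cplx_quad R _ _ _ hD2 hl; exact: h.
have hyp : hyperbolic (fhn2_vf a b eps I gam) p.
  move=> l /sg h; rewrite ReC_eq0; apply/eqP => r0.
  by rewrite r0 !mul0r ltxx in h; case: h.
split => //.
split.
  move=> l1 l2 l /sg h; rewrite ReC_lt0; case: h => h; nra.
split.
  move=> l1 l2 l /sg h; rewrite ReC_gt0; case: h => h; nra.
move=> hs; split => //.
have [r1|r1] := ltP s1 0.
  have r2 : 0 < s2 by nra.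
  have [l hl] := quad_root R s1 D1; have [m hm] := quad_root R s2 D2.
  have [_ h1] := cplx_quad R _ _ _ hD1 hl; have [_ h2] := cplx_quad R _ _ _ hD2 hm.
  have := h1 n1; have := h2 n2 => h2' h1'.
  split; [exists l | exists m]; split; [exact: eig1|rewrite ReC_lt0; nra|exact: eig2|rewrite ReC_gt0; nra].
have r1' : 0 < s1 by rewrite lt_neqAle eq_sym n1 r1.
have r2 : s2 < 0 by nra.
have [l hl] := quad_root R s1 D1; have [m hm] := quad_root R s2 D2.
have [_ h1] := cplx_quad R _ _ _ hD1 hl; have [_ h2] := cplx_quad R _ _ _ hD2 hm.
have := h1 n1; have := h2 n2 => h2' h1'.
split; [exists m | exists l]; split; [exact: eig2|rewrite ReC_lt0; nra|exact: eig1|rewrite ReC_gt0; nra].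
Qed.
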